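(* Let $q$ be a prime power with $q\equiv 1\pmod 3$, let $n$ be a positive integer and $a\in\mathbb{F}_q$. Then $f(x)=x^n\big(x^{\frac{q-1}{3}}+a\big)$ is a permutation polynomial of $\mathbb{F}_q$ if and only if all of the following hold: (a) $\gcd\big(n,\frac{q-1}{3}\big)=1$; (b) $a\notin\{-1,-\xi,-\xi^2\}$; (c) $\eta\big(\frac{\xi+a}{1+a}\big)\neq\delta^{2n}$; (d) $\eta\big(\frac{1+a}{\xi^2+a}\big)\neq\delta^{2n}$; (e) $\eta\big(\frac{\xi^2+a}{\xi+a}\big)\neq\delta^{2n}$.
   Context: A polynomial is a permutation polynomial of $\mathbb{F}_q$ if it induces a bijection of $\mathbb{F}_q$. Let $q\equiv 1\pmod 3$, let $\xi\in\mathbb{F}_q$ be a fixed cube root of unity with $\xi\neq 1$, and let $\delta\in\mathbb{C}$ be a fixed cube root of unity with $\delta\neq1$. Let $\eta:\mathbb{F}_q\to\mathbb{C}$ be the cubic multiplicative character defined by $\eta(0)=0$ and, for $c\in\mathbb{F}_q^*$ and integers $j$, $\eta(c)=\delta^j$ if and only if $c^{\frac{q-1}{3}}=\xi^j$. We write $\eta^2(c)$ for $\eta(c)^2$. *)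

(* Defs.v *)
From HB Require Import structures.
From mathcomp Require Import all_boot all_order all_algebra all_field.
Set Implicit Arguments. Unset Strict Implicit. Unset Printing Implicit Defensive.
Import GRing.Theory.
Local Open Scope ring_scope.

Definition perm_poly (F : finFieldType) (p : {poly F}) : Prop :=
  bijective (fun x : F => p.[x]).

(* The cubic multiplicative character eta : F -> algC determined by the fixed
   cube roots of unity xi (in F) and delta (in algC):
   eta 0 = 0, and for c <> 0, eta c = delta^j iff c^((q-1)/3) = xi^j. *)
Definition cubic_char (F : finFieldType) (xi : F) (delta : algC) (c : F) : algC :=
  if c == 0 then 0 else
  match [pick j : 'I_3 | c ^+ ((#|F| - 1) %/ 3) == xi ^+ j] with
  | Some j => delta ^+ j
  | None => 0
  end.

(* Main.v *)
Require Import Defs.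
From HB Require Import structures.
From mathcomp Require Import all_boot all_order all_algebra all_field zify ring.
From mathcomp Require Import cyclic.
Import GRing.Theory.
Local Open Scope ring_scope.

Lemma mu3 {R : idomainType} {xi x : R} : xi ^+ 3 = 1 -> xi != 1 -> x ^+ 3 = 1 ->
  [\/ x = 1, x = xi | x = xi ^+ 2].
Proof.
move=> h3 h1 hx.
set s := 1 + xi + xi ^+ 2.
have hs : s = 0.
  have : (xi - 1) * s = xi ^+ 3 - 1 by rewrite /s; ring.
  rewrite h3 subrr.
  by move/eqP; rewrite mulf_eq0 subr_eq0 (negbTE h1) /= => /eqP.
have E : (x - 1) * (x - xi) * (x - xi ^+ 2) = x ^+ 3 - xi ^+ 3 - s * x ^+ 2 + xi * s * x.
  by rewrite /s; ring.
move: E; rewrite hs hx h3 !mulr0 !mul0r subrr ?subr0 ?addr0 => /eqP.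
rewrite !mulf_eq0 !subr_eq0 => /orP [/orP [] | ] /eqP ->; by constructor.
Qed.

Lemma prim3 {R : idomainType} {xi : R} : xi ^+ 3 = 1 -> xi != 1 -> 3.-primitive_root xi.
Proof.
move=> h3 h1; have [k pk kd] := prim_order_exists (isT : (0 < 3)%N) h3.
move: pk kd; case: k => [|[|[|[|k]]]] //.
by move=> /prim_expr_order; rewrite expr1 => E; rewrite E eqxx in h1.
Qed.

Lemma pigeon3 {T : eqType} {a b c g1 g2 g3 : T} : a != b -> a != c -> b != c ->
  [\/ g1 = a, g2 = a | g3 = a] -> [\/ g1 = b, g2 = b | g3 = b] ->
  [\/ g1 = c, g2 = c | g3 = c] -> [/\ g1 != g2, g1 != g3 & g2 != g3].
Proof.
move=> /eqP ab /eqP ac /eqP bc.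
by case=> ?; case=> ?; case=> ?; split; apply/eqP; congruence.
Qed.


Lemma xpow1 {F : finFieldType} (x : F) : x != 0 -> x ^+ (#|F| - 1) = 1.
Proof.
move=> hx; have q0 : (0 < #|F|)%N by apply/card_gt0P; exists 0.
apply: (mulfI hx); rewrite mulr1 -exprS subn1 prednK //; exact: expf_card.
Qed.

Lemma cube_m {F : finFieldType} {x : F} : (#|F| %% 3 = 1)%N -> x != 0 ->
  (x ^+ ((#|F| - 1) %/ 3)) ^+ 3 = 1.
Proof.
move=> hq hx; rewrite -exprM.
have -> : ((#|F| - 1) %/ 3 * 3 = #|F| - 1)%N by lia.
exact: xpow1.
Qed.

Lemma cc {F : finFieldType} {xi : F} {delta : algC} : xi ^+ 3 = 1 -> xi != 1 ->
  delta ^+ 3 = 1 -> delta != 1 -> forall (c : F) j, c != 0 ->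
  c ^+ ((#|F| - 1) %/ 3) = xi ^+ j -> cubic_char xi delta c = delta ^+ j.
Proof.
move=> hx3 hx1 hd3 hd1 c j hc hcj; rewrite /cubic_char (negbTE hc).
case: pickP => [k /eqP hk | none].
  apply/eqP; rewrite (eq_prim_root_expr (prim3 hd3 hd1)).
  by rewrite -(eq_prim_root_expr (prim3 hx3 hx1)) -hk -hcj.
have := none (inord (j %% 3)); rewrite inordK ?ltn_mod //.
by rewrite (prim_expr_mod (prim3 hx3 hx1)) hcj eqxx.
Qed.

Lemma exi {F : finFieldType} {xi x : F} : (#|F| %% 3 = 1)%N ->
  xi ^+ 3 = 1 -> xi != 1 -> x != 0 -> exists i, x ^+ ((#|F| - 1) %/ 3) = xi ^+ i.
Proof.
move=> hq h3 h1 hx; case: (mu3 h3 h1 (cube_m hq hx)) => ->.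
- by exists 0%N; rewrite expr0.
- by exists 1%N; rewrite expr1.
- by exists 2%N.
Qed.

Lemma char_cond {F : finFieldType} {xi : F} {delta : algC} (n : nat) :
  (#|F| %% 3 = 1)%N -> xi ^+ 3 = 1 -> xi != 1 ->
  delta ^+ 3 = 1 -> delta != 1 -> forall u v : F, u != 0 -> v != 0 ->
  (cubic_char xi delta (u / v) == delta ^+ (2 * n)) =
  (xi ^+ n * u ^+ ((#|F| - 1) %/ 3) == v ^+ ((#|F| - 1) %/ 3)).
Proof.
move=> hq hx3 hx1 hd3 hd1 u v hu hv.
have [i hi] := exi hq hx3 hx1 hu; have [k hk] := exi hq hx3 hx1 hv.
have xi0 : xi != 0 by apply: contra hx1 => /eqP x0; rewrite -hx3 x0 expr0n.
have xiV : xi^-1 = xi ^+ 2.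
  by apply: (mulfI xi0); rewrite mulfV // -exprS hx3.
have e : (u / v) ^+ ((#|F| - 1) %/ 3) = xi ^+ (i + 2 * k).
  by rewrite expr_div_n hi hk -exprVn xiV -exprM exprD.
rewrite (cc hx3 hx1 hd3 hd1 _ _ _ e); last by rewrite mulf_neq0 ?invr_eq0.
rewrite hi hk -exprD (eq_prim_root_expr (prim3 hd3 hd1)).
rewrite (eq_prim_root_expr (prim3 hx3 hx1)).
by apply/eqP/eqP; lia.
Qed.

Theorem lemma4p1 (F : finFieldType) (xi : F) (delta : algC)
  (hq : (#|F| %% 3 = 1)%N)
  (hxi3 : xi ^+ 3 = 1) (hxi1 : xi != 1)
  (hdelta3 : delta ^+ 3 = 1) (hdelta1 : delta != 1)
  (n : nat) (hn : (0 < n)%N) (a : F) :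
  perm_poly ('X^n * ('X^((#|F| - 1) %/ 3) + a%:P)) <->
  [/\ coprime n ((#|F| - 1) %/ 3),
      a \notin [:: -1; - xi; - xi ^+ 2],
      cubic_char xi delta ((xi + a) / (1 + a)) != delta ^+ (2 * n),
      cubic_char xi delta ((1 + a) / (xi ^+ 2 + a)) != delta ^+ (2 * n) &
      cubic_char xi delta ((xi ^+ 2 + a) / (xi + a)) != delta ^+ (2 * n)].
Proof.
have q_gt1 : (1 < #|F|)%N.
  by apply/card_gt1P; exists 0, 1; rewrite !inE eq_sym oner_neq0.
set m := ((#|F| - 1) %/ 3)%N.
have hq1 : (#|F| - 1 = 3 * m)%N by rewrite /m; lia.
have m_gt0 : (0 < m)%N by lia.
have m_lt : (m < #|F| - 1)%N by lia.
have q1_gt0 : (0 < #|F| - 1)%N by lia.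
have xi0 : xi != 0 by apply: contra hxi1 => /eqP x0; rewrite -hxi3 x0 expr0n.
have pxi := prim3 hxi3 hxi1.
have d1x : 1 != xi by rewrite -{1}(expr0 xi) -{2}(expr1 xi) (eq_prim_root_expr pxi).
have d1x2 : 1 != xi ^+ 2 by rewrite -(expr0 xi) (eq_prim_root_expr pxi).
have dxx2 : xi != xi ^+ 2 by rewrite -{1}(expr1 xi) (eq_prim_root_expr pxi).
have hf x : ('X^n * ('X^m + a%:P)).[x] = x ^+ n * (x ^+ m + a) by rewrite !hornerE.
have mu x : x != 0 -> [\/ x ^+ m = 1, x ^+ m = xi | x ^+ m = xi ^+ 2].
  by move=> hx; exact: (mu3 hxi3 hxi1 (cube_m hq hx)).
pose G z := z ^+ n * (z + a) ^+ m.
have fm x : (x ^+ n * (x ^+ m + a)) ^+ m = G (x ^+ m).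
  by rewrite /G exprMn -!exprM mulnC.
have f0 : 0 ^+ n * (0 ^+ m + a) = 0 :> F by rewrite expr0n gtn_eqF // mul0r.
have G1 : G 1 = (1 + a) ^+ m by rewrite /G expr1n mul1r.
have e3 : (xi ^+ 2) ^+ n * xi ^+ n = 1 by rewrite -exprMn -exprSr hxi3 expr1n.
have xin0 : xi ^+ n != 0 by rewrite expf_neq0.
have xi2n0 : (xi ^+ 2) ^+ n != 0 by rewrite !expf_neq0.
have trans : (a + 1 != 0) -> (xi + a != 0) -> (xi ^+ 2 + a != 0) ->
  [/\ (cubic_char xi delta ((xi + a) / (1 + a)) == delta ^+ (2 * n)) = (G xi == G 1),
      (cubic_char xi delta ((1 + a) / (xi ^+ 2 + a)) == delta ^+ (2 * n)) = (G 1 == G (xi ^+ 2)) &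
      (cubic_char xi delta ((xi ^+ 2 + a) / (xi + a)) == delta ^+ (2 * n)) = (G (xi ^+ 2) == G xi)].
  move=> h1 h2 h3; rewrite addrC in h1; split.
  - by rewrite (char_cond n hq hxi3 hxi1 hdelta3 hdelta1) // G1.
  - rewrite (char_cond n hq hxi3 hxi1 hdelta3 hdelta1) // G1 /G.
    by rewrite -(inj_eq (mulfI xi2n0)) mulrA e3 mul1r.
  - rewrite (char_cond n hq hxi3 hxi1 hdelta3 hdelta1) // /G.
    by rewrite -(inj_eq (mulfI xin0)) mulrA -exprMn -expr2 -exprM mulnC exprM.
split.
- case=> g fK gK; have inj := can_inj fK.
  have [w _ wp] : exists2 w, w \in enum (predC1 (0 : F)) & (#|F| - 1).-primitive_root w.
    apply/hasP; apply: has_prim_root; first by [].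
    + by apply/allP => x; rewrite mem_enum inE => hx; apply/unity_rootP; exact: xpow1.
    + exact: enum_uniq.
    + by rewrite -cardE cardC1 subn1.
  have w0 : w != 0 by rewrite (prim_root_eq0 wp) -lt0n.
  have wm3 : (w ^+ m) ^+ 3 = 1 by rewrite -exprM mulnC -hq1 (prim_expr_order wp).
  have wm1 : w ^+ m != 1.
    by rewrite -(expr0 w) (eq_prim_root_expr wp) mod0n modn_small // -lt0n.
  have hroot z : [\/ z = 1, z = xi | z = xi ^+ 2] -> exists j, (w ^+ j) ^+ m = z.
    move=> hz; case: (mu3 hxi3 hxi1 wm3) => hwm.
    + by rewrite hwm eqxx in wm1.
    + case: hz => ->.
      * by exists 0%N; rewrite expr0 expr1n.
      * by exists 1%N; rewrite expr1.
      * by exists 2%N; rewrite exprAC hwm.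
    + case: hz => ->.
      * by exists 0%N; rewrite expr0 expr1n.
      * by exists 2%N; rewrite exprAC hwm -exprM -(prim_expr_mod pxi).
      * by exists 1%N; rewrite expr1.
  have hnz z : [\/ z = 1, z = xi | z = xi ^+ 2] -> z + a != 0.
    move=> hz; have [j hj] := hroot z hz; apply/negP => /eqP z0.
    have : w ^+ j = 0 by apply: inj; rewrite /= !hf hj z0 mulr0 f0.
    by apply/eqP; rewrite expf_neq0.
  have h1 := hnz 1 ltac:(exact: Or31).
  have h2 := hnz xi ltac:(exact: Or32).
  have h3 := hnz (xi ^+ 2) ltac:(exact: Or33).
  have [-> -> ->] := trans ltac:(by rewrite addrC) h2 h3.
  have hit z : [\/ z = 1, z = xi | z = xi ^+ 2] -> [\/ G 1 = z, G xi = z | G (xi ^+ 2) = z].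
    move=> hz; have [j hj] := hroot z hz.
    set x := g (w ^+ j); have fx : x ^+ n * (x ^+ m + a) = w ^+ j by rewrite -hf /x gK.
    have x0 : x != 0.
      apply/negP => /eqP x0; move: (expf_neq0 j w0); by rewrite -fx x0 f0 eqxx.
    by rewrite -hj -fx fm; case: (mu x x0) => ->; [apply: Or31|apply: Or32|apply: Or33].
  have [g12 g13 g23] := pigeon3 d1x d1x2 dxx2 (hit 1 ltac:(exact: Or31))
    (hit xi ltac:(exact: Or32)) (hit (xi ^+ 2) ltac:(exact: Or33)).
  rewrite eq_sym g12 g13 eq_sym g23; split => //.
  + have d0 : (0 < gcdn n m)%N by rewrite gcdn_gt0 hn.
    have dN : (gcdn n m %| #|F| - 1)%N by rewrite hq1 dvdn_mull // dvdn_gcdr.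
    set t := w ^+ ((#|F| - 1) %/ gcdn n m).
    have tn : t ^+ n = 1.
      rewrite -exprM; apply/eqP; rewrite -(prim_order_dvd wp) divn_mulAC //.
      by rewrite -muln_divA ?dvdn_gcdl // dvdn_mulr.
    have tm : t ^+ m = 1.
      rewrite -exprM; apply/eqP; rewrite -(prim_order_dvd wp) divn_mulAC //.
      by rewrite -muln_divA ?dvdn_gcdr // dvdn_mulr.
    have t1 : t = 1 by apply: inj; rewrite /= !hf tn tm !expr1n.
    move/eqP: t1; rewrite /t -(prim_order_dvd wp) => hdiv.
    have qd : (0 < (#|F| - 1) %/ gcdn n m)%N by rewrite divn_gt0 // dvdn_leq.
    have hle := dvdn_leq qd hdiv.
    rewrite /coprime eqn_leq d0 andbT leqNgt; apply/negP => d1.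
    by move: (ltn_Pdiv d1 q1_gt0); rewrite ltnNge hle.
  + by rewrite !inE !negb_or -!addr_eq0 ![a + _]addrC h1 h2 h3.
- case=> cop hb hc hd he.
  have b1 : a != -1 by apply: contra hb => /eqP ->; rewrite !inE eqxx.
  have b2 : a != - xi by apply: contra hb => /eqP ->; rewrite !inE eqxx ?orbT.
  have b3 : a != - xi ^+ 2 by apply: contra hb => /eqP ->; rewrite !inE eqxx ?orbT.
  have h1 : a + 1 != 0 by rewrite addr_eq0.
  have h2 : xi + a != 0 by rewrite addrC addr_eq0.
  have h3 : xi ^+ 2 + a != 0 by rewrite addrC addr_eq0.
  have [ec ed ee] := trans h1 h2 h3.
  rewrite ec in hc; rewrite ed in hd; rewrite ee in he.
  have hnz z : z != 0 -> z ^+ m + a != 0.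
    by move=> hz; case: (mu z hz) => ->; rewrite // addrC.
  have fnz z : z != 0 -> z ^+ n * (z ^+ m + a) != 0.
    by move=> hz; rewrite mulf_neq0 ?expf_neq0 ?hnz.
  apply: injF_bij => x y /=; rewrite !hf.
  case: (eqVneq x 0) => [-> | x0]; case: (eqVneq y 0) => [-> | y0] //.
  - by rewrite f0 => /esym/eqP; rewrite (negbTE (fnz y y0)).
  - by rewrite f0 => /eqP; rewrite (negbTE (fnz x x0)).
  move=> e; have gm := congr1 (fun u => u ^+ m) e; rewrite /= !fm in gm.
  have ez : x ^+ m = y ^+ m.
    case: (mu x x0) => hx; case: (mu y y0) => hy; rewrite hx hy in gm *;
      try done; by move: hc hd he; rewrite gm eqxx.
  have exn : x ^+ n = y ^+ n by rewrite ez in e; exact: (mulIf (hnz y y0) e).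
  have tn : (x / y) ^+ n = 1 by rewrite expr_div_n exn divff // expf_neq0.
  have tm : (x / y) ^+ m = 1 by rewrite expr_div_n ez divff // expf_neq0.
  have [k kp kd] := prim_order_exists hn tn.
  have km : (k %| m)%N by rewrite (prim_order_dvd kp) tm.
  have : (k %| gcdn n m)%N by rewrite dvdn_gcd kd km.
  rewrite (eqP cop) dvdn1 => /eqP k1; rewrite k1 in kp.
  have := prim_expr_order kp; rewrite expr1 => t1.
  by rewrite -(divfK y0 x) t1 mul1r.
Qed.
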